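(* In the D-RR setting under the strongly convex assumptions, suppose that for all $t$ $$\alpha_t\le\sqrt{\frac{2-\rho_w^2}{24\rho_w^2(5-\rho_w^2)}}\,\frac{1-\rho_w^2}{L}$$ (the right-hand side being $+\infty$ if $\rho_w=0$). Then for all $t\ge0$ and $\ell\in\{0,\dots,m-1\}$, $$\mathbb{E}\|\mathbf{x}_t^{\ell+1}-\mathbf 1(\bar x_t^{\ell+1})^\intercal\|^2\le\frac{1+\rho_w^2}{2}\mathbb{E}\|\mathbf{x}_t^{\ell}-\mathbf 1(\bar x_t^{\ell})^\intercal\|^2+\frac{30\alpha_t^2nL^2}{1-\rho_w^2}\mathbb{E}\|\bar x_t^\ell-\bar x_*^\ell\|^2+\frac{15n\rho_w^2\alpha_t^2}{1-\rho_w^2}\big(\sigma_*^2+2L\sigma^2_{\mathrm{shuffle}}\big).$$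
   Context: D-RR setting. Let $n,m,p\ge1$ be integers and $[k]=\{1,\dots,k\}$. For $i\in[n]$, $\ell\in[m]$ let $f_{i,\ell}:\mathbb{R}^p\to\mathbb{R}$ be differentiable; $f_i:=\frac1m\sum_{\ell=1}^m f_{i,\ell}$, $f:=\frac1n\sum_{i=1}^n f_i$. Let $W=(w_{ij})\in\mathbb{R}^{n\times n}$ be nonnegative, symmetric, with $W\mathbf 1=\mathbf 1$, compliant with an undirected connected graph on $[n]$ (for $i\ne j$, $w_{ij}>0$ iff $\{i,j\}$ is an edge); $\rho_w$ is the spectral norm of $W-\frac1n\mathbf 1\mathbf 1^\intercal$ (so $\rho_w<1$). The D-RR algorithm: given deterministic initial points $x_{i,0}\in\mathbb{R}^p$ and stepsizes $\alpha_t>0$, at each epoch $t=0,1,\dots$ each agent $i$ draws a permutation $(\pi^i_0,\dots,\pi^i_{m-1})$ of $[m]$ uniformly at random, independently across agents and epochs; sets $x^0_{i,t}=x_{i,t}$; for $\ell=0,\dots,m-1$ sets $x^{\ell+1}_{i,t}=\sum_{j=1}^n w_{ij}\big(x^\ell_{j,t}-\alpha_t\nabla f_{j,\pi^j_\ell}(x^\ell_{j,t})\big)$; sets $x_{i,t+1}=x^m_{i,t}$. Notation: $\mathbf{x}_t^\ell\in\mathbb{R}^{n\times p}$ has $i$-th row $(x^\ell_{i,t})^\intercal$; $\bar x_t^\ell=\frac1n\sum_i x^\ell_{i,t}$; $\mathbf 1(\bar x_t^\ell)^\intercal$ is the $n\times p$ matrix all of whose rows equal $(\bar x_t^\ell)^\intercal$;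 $\|\cdot\|$ is Euclidean/Frobenius norm; $\mathbb{E}$ is expectation over all permutations. Strongly convex assumptions: each $f_{i,\ell}$ is $\mu$-strongly convex with $L$-Lipschitz gradient ($0<\mu\le L$); $x^*$ is the unique minimizer of $f$; $\sigma_*^2:=\frac{1}{mn}\sum_{i,\ell}\|\nabla f_{i,\ell}(x^* )\|^2$. For epoch $t$ define $\bar x_*^\ell:=x^*-\alpha_t\sum_{k=0}^{\ell-1}\frac1n\sum_{i=1}^n\nabla f_{i,\pi^i_k}(x^* )$ ($\ell=0,\dots,m$), $\bar s_\ell:=\frac1n\sum_i f_{i,\pi^i_\ell}$, and $\sigma^2_{\mathrm{shuffle}}:=\max_{\ell=0,\dots,m-1}\mathbb{E}\big[\bar s_\ell(\bar x_*^\ell)-\bar s_\ell(x^* )-\langle\nabla\bar s_\ell(x^* ),\bar x_*^\ell-x^*\rangle\big]$. *)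

(* Defs.v *)
From HB Require Import structures.
From mathcomp Require Import all_boot all_order all_algebra all_fingroup.
From mathcomp Require Import all_classical all_reals all_analysis.
Set Implicit Arguments. Unset Strict Implicit. Unset Printing Implicit Defensive.
Import Order.TTheory GRing.Theory Num.Theory.
Import numFieldNormedType.Exports.
Local Open Scope ring_scope.
Local Open Scope classical_set_scope.

Section DRR.
Variable R : realType.

Definition vdot (p : nat) (u v : 'rV[R]_p) : R := \sum_(j < p) u 0 j * v 0 j.
Definition vsq (p : nat) (u : 'rV[R]_p) : R := vdot u u.
Definition fsq (a b : nat) (X : 'M[R]_(a, b)) : R := \sum_(i < a) \sum_(j < b) X i j ^+ 2.

Definition spectral_norm (n : nat) (A : 'M[R]_n) : R :=
  sup [set Num.sqrt (fsq (A *m x)) | x in [set x : 'cV[R]_n | fsq x = 1]].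

Definition is_gradient (p : nat) (f : 'rV[R]_p -> R) (g : 'rV[R]_p -> 'rV[R]_p) :=
  forall x, differentiable f x /\ forall v, 'D_v f x = vdot (g x) v.

Definition strongly_convex_with (p : nat) (mu : R) (f : 'rV[R]_p -> R) g :=
  forall x y : 'rV[R]_p, f x + vdot (g x) (y - x) + mu / 2 * vsq (y - x) <= f y.

Definition lipschitz_with (p : nat) (L : R) (g : 'rV[R]_p -> 'rV[R]_p) :=
  forall x y, Num.sqrt (vsq (g x - g y)) <= L * Num.sqrt (vsq (x - y)).

Definition avg_row (n p : nat) (X : 'M[R]_(n, p)) : 'rV[R]_p :=
  n%:R^-1 *: \sum_(i < n) row i X.

Definition cons_err (n p : nat) (X : 'M[R]_(n, p)) : 'M[R]_(n, p) :=
  X - \matrix_(i < n) avg_row X.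

Variables (n m p : nat).

Definition drr_step (W : 'M[R]_n) (g : 'I_n -> 'I_m -> 'rV[R]_p -> 'rV[R]_p)
  (a : R) (s : {ffun 'I_n -> 'S_m}) (X : 'M[R]_(n, p)) (l : 'I_m) : 'M[R]_(n, p) :=
  W *m (X - a *: \matrix_(i < n) g i (s i l) (row i X)).

Definition drr_inner W g a s (X : 'M[R]_(n, p)) (l : nat) : 'M[R]_(n, p) :=
  foldl (drr_step W g a s) X (take l (enum 'I_m)).

(* sample space of the permutations of epochs 0..t of all agents *)
Definition sample (t : nat) := {ffun 'I_t.+1 -> {ffun 'I_n -> 'S_m}}.

Fixpoint drr_outer W g (alpha : nat -> R) (X0 : 'M[R]_(n, p)) (t : nat)
  (om : sample t) (k : nat) : 'M[R]_(n, p) :=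
  match k with
  | 0 => X0
  | k'.+1 => drr_inner W g (alpha k') (om (inord k'))
               (drr_outer W g alpha X0 om k') m
  end.

Definition Exp (T : finType) (Y : T -> R) : R := (\sum_(w : T) Y w) / #|T|%:R.

Definition xbar_star (g : 'I_n -> 'I_m -> 'rV[R]_p -> 'rV[R]_p) (a : R) (s : {ffun 'I_n -> 'S_m}) (xs : 'rV[R]_p) (l : nat) :=
  xs - a *: \sum_(k <- take l (enum 'I_m)) (n%:R^-1 *: \sum_(i < n) g i (s i k) xs).

Definition sigma_star_sq (g : 'I_n -> 'I_m -> 'rV[R]_p -> 'rV[R]_p) (xs : 'rV[R]_p) : R :=
  (m * n)%:R^-1 * \sum_(i < n) \sum_(l < m) vsq (g i l xs).

(* sigma_shuffle^2 for stepsize a; sbar_l = (1/n) sum_i f_{i,pi^i_l},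
   whose gradient is (1/n) sum_i grad f_{i,pi^i_l} *)
Definition sigma_shuffle_sq (F : 'I_n -> 'I_m -> 'rV[R]_p -> R) (g : 'I_n -> 'I_m -> 'rV[R]_p -> 'rV[R]_p) (a : R) (xs : 'rV[R]_p) : R :=
  \big[Num.max/0]_(l < m)
    Exp (fun s : {ffun 'I_n -> 'S_m} =>
      let sb := fun x => n%:R^-1 * \sum_(i < n) F i (s i l) x in
      let gsb := n%:R^-1 *: \sum_(i < n) g i (s i l) xs in
      let y := xbar_star g a s xs l in
      sb y - sb xs - vdot gsb (y - xs)).

End DRR.

(* Main.v *)
Require Import Defs.
From HB Require Import structures.
From mathcomp Require Import all_boot all_order all_algebra all_fingroup.
From mathcomp Require Import all_classical all_reals all_analysis.
From mathcomp Require Import ring lra.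
Import Order.TTheory GRing.Theory Num.Theory.
Import numFieldNormedType.Exports.
Local Open Scope ring_scope.
Set Implicit Arguments. Unset Strict Implicit.

Section Aux.
Variable R : realType.
Variable p : nat.
Implicit Types u v w : 'rV[R]_p.

Lemma vdotC u v : vdot u v = vdot v u.
Proof. by apply: eq_bigr => j _; rewrite mulrC. Qed.
Lemma vdotDl u v w : vdot (u + v) w = vdot u w + vdot v w.
Proof. rewrite /vdot -big_split; apply: eq_bigr => j _; by rewrite !mxE /= mulrDl. Qed.
Lemma vdotBl u v w : vdot (u - v) w = vdot u w - vdot v w.
Proof. rewrite /vdot -sumrB; apply: eq_bigr => j _; by rewrite !mxE /= mulrBl. Qed.
Lemma vdotZl (a : R) u w : vdot (a *: u) w = a * vdot u w.
Proof. rewrite /vdot mulr_sumr; apply: eq_bigr => j _; by rewrite !mxE /= mulrA. Qed.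
Lemma vdotDr u v w : vdot w (u + v) = vdot w u + vdot w v.
Proof. by rewrite !(vdotC w) vdotDl. Qed.
Lemma vdotBr u v w : vdot w (u - v) = vdot w u - vdot w v.
Proof. by rewrite !(vdotC w) vdotBl. Qed.
Lemma vdotZr (a : R) u w : vdot w (a *: u) = a * vdot w u.
Proof. by rewrite !(vdotC w) vdotZl. Qed.
Lemma vdot_suml (I : finType) (f : I -> 'rV[R]_p) w :
  vdot (\sum_i f i) w = \sum_i vdot (f i) w.
Proof.
rewrite /vdot exchange_big /=; apply: eq_bigr => j _.
by rewrite summxE mulr_suml.
Qed.
Lemma vsq_ge0 u : 0 <= vsq u.
Proof. by apply: sumr_ge0 => j _; rewrite -expr2 sqr_ge0. Qed.

Lemma young (a b c : R) : 0 < c -> (a + b) ^+ 2 <= (1 + c) * a ^+ 2 + (1 + c^-1) * b ^+ 2.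
Proof.
move=> c0.
have h : 0 <= (c * a - b) ^+ 2 / c by apply: divr_ge0; [exact: sqr_ge0| exact: ltW].
have e : (c * a - b) ^+ 2 / c = c * a ^+ 2 - 2 * a * b + c^-1 * b ^+ 2.
  by field; rewrite gt_eqF.
lra.
Qed.

Lemma vyoung u v (c : R) : 0 < c -> vsq (u + v) <= (1 + c) * vsq u + (1 + c^-1) * vsq v.
Proof.
move=> c0; rewrite /vsq /vdot !mulr_sumr -big_split /=; apply: ler_sum => j _.
rewrite !mxE -!expr2; exact: young.
Qed.

Lemma lip_sq (L : R) (f : 'rV[R]_p -> 'rV[R]_p) x y : 0 <= L -> lipschitz_with L f ->
  vsq (f x - f y) <= L ^+ 2 * vsq (x - y).
Proof.
move=> L0 /(_ x y) h.
rewrite -(sqr_sqrtr (vsq_ge0 (f x - f y))) -(sqr_sqrtr (vsq_ge0 (x - y))) -exprMn.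
by rewrite ler_pXn2r // ?nnegrE ?mulr_ge0 ?sqrtr_ge0.
Qed.

Lemma dot_le u v (L : R) : 0 < L -> 2 * vdot u v <= L^-1 * vsq u + L * vsq v.
Proof.
move=> L0; rewrite /vsq /vdot mulr_sumr !mulr_sumr -big_split /=; apply: ler_sum => j _.
have h : 0 <= (u 0 j - L * v 0 j) ^+ 2 / L by apply: divr_ge0; [exact: sqr_ge0| exact: ltW].
have e : (u 0 j - L * v 0 j) ^+ 2 / L = L^-1 * (u 0 j * u 0 j) - 2 * (u 0 j * v 0 j) + L * (v 0 j * v 0 j).
  by field; rewrite gt_eqF.
lra.
Qed.

Lemma cocoercive (F : 'rV[R]_p -> R) (g : 'rV[R]_p -> 'rV[R]_p) (mu L : R) :
  0 < mu -> 0 < L -> strongly_convex_with mu F g -> lipschitz_with L g ->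
  forall x y, vsq (g y - g x) <= 4 * L * (F y - F x - vdot (g x) (y - x)).
Proof.
move=> mu0 L0 sc lip.
have cvx : forall x y, F x + vdot (g x) (y - x) <= F y.
  move=> x y; have := sc x y; have := vsq_ge0 (y - x).
  have : 0 <= mu / 2 * vsq (y - x) by apply: mulr_ge0; [lra| exact: vsq_ge0].
  lra.
have desc : forall x y, F y <= F x + vdot (g x) (y - x) + L * vsq (y - x).
  move=> x y; have h1 := cvx y x.
  have h2 := dot_le (g y - g x) (y - x) L0.
  have h3 := lip_sq y x (ltW L0) lip.
  have e1 : vdot (g y) (x - y) = - vdot (g y) (y - x).
    by rewrite -opprB -scaleN1r vdotZr mulN1r.
  have e2 : vdot (g y - g x) (y - x) = vdot (g y) (y - x) - vdot (g x) (y - x) by rewrite vdotBl.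
  have h4 : L^-1 * vsq (g y - g x) <= L * vsq (y - x).
    rewrite -(ler_pM2l L0) mulrA mulfV ?gt_eqF // mul1r.
    apply: (le_trans h3); rewrite mulrA -expr2; exact: lexx.
  lra.
move=> x y.
set d := g y - g x; set c := (2 * L)^-1.
have c0 : 0 < c by rewrite invr_gt0; lra.
set z := y - c *: d.
have h1 := cvx x z.
have h2 := desc y z.
have ezx : z - x = (y - x) - c *: d by rewrite /z; rewrite addrAC.
have ezy : z - y = (- c) *: d by rewrite /z addrAC subrr add0r scaleNr.
rewrite ezx vdotBr vdotZr in h1.
rewrite ezy /vsq vdotZr vdotZl vdotZr in h2.
have e3 : vdot (g y) d - vdot (g x) d = vsq d by rewrite -vdotBl.
have e4 : L * (c * (c * vsq d)) = c / 2 * vsq d.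
  rewrite /c; field; lra.
have hd := vsq_ge0 d.
suff : c / 2 * vsq d <= F y - F x - vdot (g x) (y - x).
  move=> hh; have -> : vsq d = 4 * L * (c / 2 * vsq d) by rewrite /c; field; lra.
  by rewrite ler_pM2l //; lra.
rewrite /vsq in e3 hd e4 *. nra.
Qed.
End Aux.

Section Aux2.
Variable R : realType.

Lemma Exp_le (T : finType) (Y Z : T -> R) : (forall w, Y w <= Z w) -> Exp Y <= Exp Z.
Proof.
move=> h; rewrite /Exp ler_wpM2r ?invr_ge0 ?ler0n //; exact: ler_sum.
Qed.
Lemma ExpD (T : finType) (Y Z : T -> R) : Exp (fun w => Y w + Z w) = Exp Y + Exp Z.
Proof. by rewrite /Exp big_split /= mulrDl. Qed.
Lemma ExpZ (T : finType) (a : R) (Y : T -> R) : Exp (fun w => a * Y w) = a * Exp Y.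
Proof. by rewrite /Exp -mulr_sumr mulrA. Qed.
Lemma Exp_sum (T : finType) (I : finType) (Y : I -> T -> R) :
  Exp (fun w => \sum_i Y i w) = \sum_i Exp (Y i).
Proof. by rewrite /Exp exchange_big /= mulr_suml. Qed.

Lemma Exp_comp (T A : finType) (w0 : T) (X : T -> A) (phi : A -> R) :
  (forall a b : A, exists psi : T -> T, injective psi /\ forall w, X (psi w) = tperm a b (X w)) ->
  Exp (fun w => phi (X w)) = Exp phi.
Proof.
move=> hyp.
pose N a := \sum_w ((X w == a)%:R : R).
have NE : forall a b, N a = N b.
  move=> a b; have [psi [psiI psiX]] := hyp a b.
  rewrite /N (reindex_inj psiI) /=; apply: eq_bigr => w _; rewrite psiX.
  by congr (_%:R); rewrite -[X in _ == X](tpermR a b) (can_eq (tpermK a b)).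
have e1 : forall w, phi (X w) = \sum_a (X w == a)%:R * phi a.
  move=> w; rewrite (bigD1 (X w)) //= eqxx mul1r big1 ?addr0 // => a /negbTE.
  by rewrite eq_sym => ->; rewrite mul0r.
have e2 : forall w, (1 : R) = \sum_a ((X w == a)%:R : R).
  move=> w; rewrite (bigD1 (X w)) //= eqxx big1 ?addr0 // => a /negbTE.
  by rewrite eq_sym => ->.
rewrite /Exp (eq_bigr _ (fun w _ => e1 w)) exchange_big /=.
have cT : #|T|%:R = \sum_a N a :> R.
  rewrite -sum1_card natr_sum (eq_bigr _ (fun w _ => e2 w)) exchange_big //.
rewrite cT (eq_bigr (fun a => N (X w0) * phi a)); last first.
  by move=> a _; rewrite -(NE a (X w0)) /N mulr_suml.
rewrite (eq_bigr (fun a => N (X w0)) (fun a _ => NE a (X w0))) sumr_const.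
rewrite -mulr_sumr -[_ *+ _]mulr_natr -mulf_div divff ?mul1r //.
rewrite /N gt_eqF // (bigD1 w0) //= eqxx; rewrite -[true%:R]/(1:R).
have : 0 <= \sum_(i | i != w0) ((X i == X w0)%:R : R) by apply: sumr_ge0 => ? _; rewrite ler0n.
lra.
Qed.

Lemma Exp_ffun (I A : finType) (i : I) (a0 : A) (phi : A -> R) :
  Exp (fun f : {ffun I -> A} => phi (f i)) = Exp phi.
Proof.
apply: (Exp_comp [ffun=> a0]) => a b.
exists (fun f : {ffun I -> A} => [ffun k => if k == i then tperm a b (f k) else f k]); split.
  move=> f1 f2 /ffunP e; apply/ffunP => k; have := e k; rewrite !ffunE.
  by case: (k == i) => //; apply: perm_inj.
by move=> f; rewrite ffunE eqxx.
Qed.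

Lemma Exp_perm (m : nat) (l : 'I_m) (phi : 'I_m -> R) :
  Exp (fun s : 'S_m => phi (s l)) = Exp phi.
Proof.
apply: (Exp_comp 1%g) => a b.
exists (fun s => (s * tperm a b)%g); split; first exact: mulIg.
by move=> s; rewrite permM.
Qed.

Lemma Exp_ord (m : nat) (phi : 'I_m -> R) : Exp phi = (\sum_j phi j) / m%:R.
Proof. by rewrite /Exp card_ord. Qed.

Lemma le_bigmax0 (I : eqType) (r : seq I) (F : I -> R) x : x \in r ->
  F x <= \big[Num.max/0]_(i <- r) F i.
Proof.
elim: r => [//|a r IH]; rewrite inE big_cons => /orP [/eqP -> | /IH h].
  by rewrite le_max lexx.
by rewrite le_max h orbT.
Qed.
End Aux2.

Section Aux3.
Variable R : realType.

Lemma fsq_ge0 a b (M : 'M[R]_(a, b)) : 0 <= fsq M.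
Proof. by apply: sumr_ge0 => i _; apply: sumr_ge0 => j _; rewrite sqr_ge0. Qed.

Lemma fsqZ a b (c : R) (M : 'M[R]_(a, b)) : fsq (c *: M) = c ^+ 2 * fsq M.
Proof.
rewrite /fsq mulr_sumr; apply: eq_bigr => i _; rewrite mulr_sumr; apply: eq_bigr => j _.
by rewrite mxE exprMn.
Qed.

Lemma fsq_cV n (y : 'cV[R]_n) : fsq y = \sum_i y i 0 ^+ 2.
Proof. by apply: eq_bigr => i _; rewrite big_ord1. Qed.

Lemma fsq_cols a b (M : 'M[R]_(a, b)) : fsq M = \sum_j fsq (col j M).
Proof.
rewrite /fsq exchange_big /=; apply: eq_bigr => j _.
by apply: eq_bigr => i _; rewrite big_ord1 mxE.
Qed.

Lemma spec_bound n (A : 'M[R]_n) (y : 'cV[R]_n) :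
  fsq (A *m y) <= spectral_norm A ^+ 2 * fsq y.
Proof.
set S := [set Num.sqrt (fsq (A *m x)) | x in [set x : 'cV[R]_n | fsq x = 1]]%classic.
have ub : has_ubound S.
  exists (Num.sqrt (\sum_i (\sum_k `|A i k|) ^+ 2)) => _ [x /= hx <-].
  rewrite ler_sqrt; last by apply: sumr_ge0 => i _; exact: sqr_ge0.
  rewrite fsq_cV; apply: ler_sum => i _.
  have xb : forall k, `|x k 0| <= 1.
    move=> k; have : x k 0 ^+ 2 <= 1.
      rewrite -hx fsq_cV (bigD1 k) //= lerDl; apply: sumr_ge0 => *; exact: sqr_ge0.
    by move=> h; rewrite ler_norml; apply/andP; split; nra.
  rewrite -real_normK ?num_real // ler_pXn2r ?nnegrE ?normr_ge0 //.
    rewrite mxE; apply: (le_trans (ler_norm_sum _ _ _)); apply: ler_sum => k _.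
    rewrite normrM; rewrite -[X in _ <= X]mulr1; apply: ler_pM => //; exact: normr_ge0.
  by apply: sumr_ge0 => k _; exact: normr_ge0.
have key : forall x : 'cV[R]_n, fsq x = 1 -> fsq (A *m x) <= spectral_norm A ^+ 2.
  move=> x hx; have h : Num.sqrt (fsq (A *m x)) <= spectral_norm A.
    by apply: (ub_le_sup ub); exists x.
  rewrite -(sqr_sqrtr (fsq_ge0 (A *m x))) ler_pXn2r ?nnegrE ?sqrtr_ge0 //.
  exact: le_trans (sqrtr_ge0 _) h.
have [y0|ynz] := eqVneq (fsq y) 0.
  have ey : forall k, y k 0 = 0.
    move=> k; move: y0; rewrite fsq_cV => /eqP; rewrite psumr_eq0; last by move=> *; exact: sqr_ge0.
    by move/allP/(_ k (mem_index_enum _)); rewrite sqrf_eq0 => /eqP.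
  rewrite y0 mulr0.
  have -> : y = 0 by apply/matrixP => k j; rewrite (ord1 j) ey mxE.
  rewrite mulmx0; suff -> : fsq (0 : 'cV[R]_n) = 0 by [].
  by apply: big1 => i _; apply: big1 => j _; rewrite mxE expr0n.
have ypos : 0 < fsq y by rewrite lt_def ynz fsq_ge0.
set c := Num.sqrt (fsq y).
have cpos : 0 < c by rewrite sqrtr_gt0.
have hx : fsq (c^-1 *: y) = 1.
  rewrite fsqZ exprVn sqr_sqrtr ?mulVf //; exact: ltW.
have := key _ hx; rewrite -scalemxAr fsqZ exprVn sqr_sqrtr; last exact: ltW.
by rewrite ler_pdivrMl // mulrC.
Qed.
End Aux3.

Section Aux4.
Variable R : realType.

Lemma col_ident n (n0 : (0 < n)%N) (z : 'I_n -> R) (y : R) :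
  \sum_i (z i - y) ^+ 2 = \sum_i (z i - n%:R^-1 * \sum_k z k) ^+ 2
     + n%:R * (n%:R^-1 * \sum_k z k - y) ^+ 2.
Proof.
set m := n%:R^-1 * \sum_k z k.
have nz : (n%:R : R) != 0 by rewrite pnatr_eq0 -lt0n.
have sz : \sum_k z k = n%:R * m by rewrite /m mulrA mulfV ?mul1r.
rewrite (eq_bigr (fun i => (z i - m) ^+ 2 + ((m - y) * 2 * z i - (m - y) * (y + m)))); last first.
  by move=> i _; ring.
rewrite big_split /= sumrB -mulr_sumr sumr_const card_ord sz.
rewrite -[_ *+ n]mulr_natr; ring.
Qed.

Lemma cons_col_le n (n0 : (0 < n)%N) (z : 'I_n -> R) :
  \sum_i (z i - n%:R^-1 * \sum_k z k) ^+ 2 <= \sum_i z i ^+ 2.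
Proof.
have := col_ident n0 z 0; rewrite (eq_bigr (fun i => z i ^+ 2)); last by move=> i _; rewrite subr0.
move=> ->; rewrite lerDl; apply: mulr_ge0; [exact: ler0n| exact: sqr_ge0].
Qed.

Lemma consE n p (Z : 'M[R]_(n,p)) i j : cons_err Z i j = Z i j - n%:R^-1 * \sum_k Z k j.
Proof. rewrite /cons_err /avg_row !mxE summxE. by under eq_bigr do rewrite !mxE. Qed.

Lemma avgE n p (Z : 'M[R]_(n,p)) j : avg_row Z 0 j = n%:R^-1 * \sum_k Z k j.
Proof. rewrite /avg_row !mxE summxE. by under eq_bigr do rewrite !mxE. Qed.

Lemma fsq_cons_le n p (n0 : (0 < n)%N) (G : 'M[R]_(n,p)) : fsq (cons_err G) <= fsq G.
Proof.
rewrite /fsq exchange_big [X in _ <= X]exchange_big /=; apply: ler_sum => j _.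
under eq_bigr do rewrite consE.
exact: cons_col_le.
Qed.

Lemma rows_ident n p (n0 : (0 < n)%N) (X : 'M[R]_(n,p)) (y : 'rV[R]_p) :
  \sum_i vsq (row i X - y) = fsq (cons_err X) + n%:R * vsq (avg_row X - y).
Proof.
rewrite /vsq /vdot /fsq exchange_big [X in _ = X + _]exchange_big /= mulr_sumr -big_split /=.
apply: eq_bigr => j _.
rewrite (eq_bigr (fun i => (X i j - y 0 j) ^+ 2)); last by move=> i _; rewrite !mxE expr2.
rewrite (col_ident n0 (fun i => X i j) (y 0 j)); congr (_ + _).
  by apply: eq_bigr => i _; rewrite consE.
rewrite !mxE.
have -> : (\sum_(i < n) row i X) 0 j = \sum_k X k j.
  by rewrite summxE; apply: eq_bigr => k _; rewrite mxE.
by rewrite expr2.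
Qed.

Lemma fsq_young a b (P Q : 'M[R]_(a, b)) (al c : R) : 0 < c ->
  fsq (P - al *: Q) <= (1 + c) * fsq P + (1 + c^-1) * al ^+ 2 * fsq Q.
Proof.
move=> c0; rewrite /fsq !mulr_sumr -big_split; apply: ler_sum => i _.
rewrite !mulr_sumr -big_split; apply: ler_sum => j _ /=.
rewrite !mxE; have := young (P i j) (- (al * Q i j)) c0.
rewrite sqrrN exprMn; lra.
Qed.

Lemma mxBZE n p (A B : 'M[R]_(n,p)) (a : R) i j : (A - a *: B) i j = A i j - a * B i j.
Proof. by rewrite !mxE. Qed.

Lemma cons_lin n p (X G : 'M[R]_(n,p)) (a : R) :
  cons_err (X - a *: G) = cons_err X - a *: cons_err G.
Proof.
apply/matrixP => i j; rewrite mxBZE !consE mxBZE.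
rewrite (eq_bigr (fun k => X k j - a * G k j)); last by move=> k _; rewrite mxBZE.
rewrite sumrB -mulr_sumr; ring.
Qed.

Lemma cons_W n p (n0 : (0 < n)%N) (W : 'M[R]_n) (Z : 'M[R]_(n,p)) :
  W^T = W -> (forall i, \sum_(j < n) W i j = 1) ->
  cons_err (W *m Z) = (W - n%:R^-1 *: const_mx 1) *m cons_err Z.
Proof.
move=> hT hs.
have nz : (n%:R : R) != 0 by rewrite pnatr_eq0 -lt0n.
have cs : forall k, \sum_(k' < n) W k' k = 1.
  move=> k; rewrite -(hs k); apply: eq_bigr => k' _.
  by rewrite -[in RHS]hT mxE.
apply/matrixP => i j; rewrite consE !mxE.
set S := \sum_k Z k j.
have e1 : \sum_k (W *m Z) k j = S.
  under eq_bigr do rewrite mxE.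
  rewrite exchange_big /=; apply: eq_bigr => k _.
  by rewrite -mulr_suml cs mul1r.
rewrite e1.
rewrite [RHS](eq_bigr (fun k => W i k * Z k j - (n%:R^-1 * S) * W i k - n%:R^-1 * Z k j
                        + n%:R^-1 * (n%:R^-1 * S))); last first.
  by move=> k _; rewrite consE !mxE -/S; ring.
rewrite !big_split /= !sumrN -!mulr_sumr hs sumr_const card_ord -/S.
by rewrite -[_ *+ n]mulr_natr; field.
Qed.

Lemma col_mulmx n a b (A : 'M[R]_(n, a)) (Y : 'M[R]_(a, b)) j :
  col j (A *m Y) = A *m col j Y.
Proof. by rewrite !colE mulmxA. Qed.

Lemma cons_contract n p (n0 : (0 < n)%N) (W : 'M[R]_n) (Z : 'M[R]_(n,p)) :
  W^T = W -> (forall i, \sum_(j < n) W i j = 1) ->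
  fsq (cons_err (W *m Z)) <= spectral_norm (W - n%:R^-1 *: const_mx 1) ^+ 2 * fsq (cons_err Z).
Proof.
move=> hT hs; rewrite cons_W // fsq_cols [X in _ <= _ * X]fsq_cols mulr_sumr.
apply: ler_sum => j _; rewrite col_mulmx; exact: spec_bound.
Qed.
End Aux4.

Section Aux5.
Variable R : realType.

Lemma coefP (x A : R) : 0 <= x -> x < 1 -> 0 <= A ->
  24 * x * (5 - x) * A <= (2 - x) * (1 - x) ^+ 2 ->
  6 * x * (1 - x) + 15 * x * A * (2 + x) <= (1 + x) * (2 + x) * (1 - x).
Proof.
move=> x0 x1 A0 hA.
have h5 : 0 < 24 * (5 - x) by lra.
rewrite -(ler_pM2l h5).
have hB : 15 * (2 + x) * (24 * x * (5 - x) * A) <= 15 * (2 + x) * ((2 - x) * (1 - x) ^+ 2).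
  by rewrite ler_pM2l //; lra.
have hC : 0 <= (1 - x) ^+ 2 * (2 - x) * (90 - 39 * x).
  by apply: mulr_ge0; [apply: mulr_ge0; [exact: sqr_ge0| lra]| lra].
have e1 : 24 * (5 - x) * ((1 + x) * (2 + x) * (1 - x)) - 24 * (5 - x) * (6 * x * (1 - x))
   - 15 * (2 + x) * ((2 - x) * (1 - x) ^+ 2) = (1 - x) ^+ 2 * (2 - x) * (90 - 39 * x) by ring.
have e2 : 24 * (5 - x) * (6 * x * (1 - x) + 15 * x * A * (2 + x)) =
   24 * (5 - x) * (6 * x * (1 - x)) + 15 * (2 + x) * (24 * x * (5 - x) * A) by ring.
lra.
Qed.

Lemma final_arith (x a L n P V S D LHS Q : R) :
  0 <= x -> x < 1 -> 0 < L -> 0 <= n -> 0 <= P -> 0 <= V ->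
  24 * x * (5 - x) * (a ^+ 2 * L ^+ 2) <= (2 - x) * (1 - x) ^+ 2 ->
  LHS <= x * ((1 + (1 - x) / (2 + x)) * P + (1 + ((1 - x) / (2 + x))^-1) * a ^+ 2 * Q) ->
  Q <= 5 / 2 * L ^+ 2 * (P + n * V) + 10 * L * n * D + 5 * S ->
  LHS <= (1 + x) / 2 * P + 30 * a ^+ 2 * n * L ^+ 2 / (1 - x) * V
         + 15 * x * a ^+ 2 / (1 - x) * S + 30 * x * L * a ^+ 2 * n / (1 - x) * D.
Proof.
move=> x0 x1 L0 n0 P0 V0 hA hL hQ.
have u0 : 0 < 1 - x by lra.
have w0 : 0 < 2 + x by lra.
have u1 : 1 - x != 0 by rewrite gt_eqF.
have w1 : 2 + x != 0 by rewrite gt_eqF.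
have ec : 1 + ((1 - x) / (2 + x))^-1 = 3 / (1 - x).
  by rewrite invf_div; field; rewrite ?u1 ?w1.
have ec2 : 1 + (1 - x) / (2 + x) = 3 / (2 + x) by field; rewrite ?u1 ?w1.
rewrite ec ec2 in hL.
set B := x * (3 / (1 - x) * a ^+ 2).
have B0 : 0 <= B by apply: mulr_ge0 => //; apply: mulr_ge0; [apply: divr_ge0; lra| exact: sqr_ge0].
have h1 : LHS <= x * (3 / (2 + x)) * P + B * Q.
  suff -> : x * (3 / (2 + x)) * P + B * Q = x * (3 / (2 + x) * P + 3 / (1 - x) * a ^+ 2 * Q) by [].
  rewrite /B; ring.
have h2 : B * Q <= B * (5 / 2 * L ^+ 2 * (P + n * V) + 10 * L * n * D + 5 * S) by rewrite ler_wpM2l.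
have eS : B * 5 = 15 * x * a ^+ 2 / (1 - x) by rewrite /B; field; rewrite ?u1 ?w1.
have eD : B * (10 * L * n) = 30 * x * L * a ^+ 2 * n / (1 - x) by rewrite /B; field; rewrite ?u1 ?w1.
have hV : B * (5 / 2 * L ^+ 2 * n) <= 30 * a ^+ 2 * n * L ^+ 2 / (1 - x).
  have -> : B * (5 / 2 * L ^+ 2 * n) = x * (15 / 2 * a ^+ 2 * n * L ^+ 2 / (1 - x)) by rewrite /B; field; rewrite ?u1 ?w1.
  have k0 : 0 <= 15 / 2 * a ^+ 2 * n * L ^+ 2 / (1 - x).
    by apply: divr_ge0; [apply: mulr_ge0; [apply: mulr_ge0; [apply: mulr_ge0; [lra|exact: sqr_ge0]|done]|exact: sqr_ge0]|lra].
  have : x * (15 / 2 * a ^+ 2 * n * L ^+ 2 / (1 - x)) <= 15 / 2 * a ^+ 2 * n * L ^+ 2 / (1 - x).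
    by rewrite ler_piMl //; lra.
  have -> : 30 * a ^+ 2 * n * L ^+ 2 / (1 - x) = 4 * (15 / 2 * a ^+ 2 * n * L ^+ 2 / (1 - x)) by field; rewrite ?u1 ?w1.
  lra.
have hP : x * (3 / (2 + x)) + B * (5 / 2 * L ^+ 2) <= (1 + x) / 2.
  have hc := coefP x0 x1 (mulr_ge0 (sqr_ge0 a) (sqr_ge0 L)) hA.
  have -> : x * (3 / (2 + x)) + B * (5 / 2 * L ^+ 2) =
     (6 * x * (1 - x) + 15 * x * (a ^+ 2 * L ^+ 2) * (2 + x)) / (2 * (2 + x) * (1 - x)).
    by rewrite /B; field; rewrite ?u1 ?w1.
  rewrite ler_pdivrMr; last by apply: mulr_gt0 => //; lra.
  have -> : (1 + x) / 2 * (2 * (2 + x) * (1 - x)) = (1 + x) * (2 + x) * (1 - x) by field.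
  exact: hc.
have hVV : B * (5 / 2 * L ^+ 2 * n) * V <= 30 * a ^+ 2 * n * L ^+ 2 / (1 - x) * V by rewrite ler_wpM2r.
have hPP : (x * (3 / (2 + x)) + B * (5 / 2 * L ^+ 2)) * P <= (1 + x) / 2 * P by rewrite ler_wpM2r.
have e : B * (5 / 2 * L ^+ 2 * (P + n * V) + 10 * L * n * D + 5 * S) =
   B * (5 / 2 * L ^+ 2) * P + B * (5 / 2 * L ^+ 2 * n) * V + B * (10 * L * n) * D + B * 5 * S by ring.
rewrite e eS eD in h2.
have e3 : (x * (3 / (2 + x)) + B * (5 / 2 * L ^+ 2)) * P = x * (3 / (2 + x)) * P + B * (5 / 2 * L ^+ 2) * P by ring.
lra.
Qed.
End Aux5.

Unset Implicit Arguments. Set Strict Implicit.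
Lemma term_bound (R : realType) p (Fi : 'rV[R]_p -> R) (gi : 'rV[R]_p -> 'rV[R]_p) (mu L : R) xi y xs :
  0 < mu -> 0 < L -> strongly_convex_with mu Fi gi -> lipschitz_with L gi ->
  vsq (gi xi) <= 5 / 2 * L ^+ 2 * vsq (xi - y)
     + 10 * L * (Fi y - Fi xs - vdot (gi xs) (y - xs)) + 5 * vsq (gi xs).
Proof.
move=> mu0 L0 sc lip.
have e : gi xi = (gi xi - gi y) + ((gi y - gi xs) + gi xs) by rewrite !subrK.
have p1 : (0 : R) < 3 / 2 by lra.
have p2 : (0 : R) < 1 / 2 by lra.
have h1 := vyoung (gi xi - gi y) ((gi y - gi xs) + gi xs) p1.
have h2 := vyoung (gi y - gi xs) (gi xs) p2.
have h3 := lip_sq xi y (ltW L0) lip.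
have h4 := cocoercive mu0 L0 sc lip xs y.
have c1 : 1 + (3 / 2 : R)^-1 = 5 / 3 by field.
have c2 : 1 + (1 / 2 : R)^-1 = 3 by field.
rewrite -e c1 in h1; rewrite c2 in h2.
have v1 := vsq_ge0 (gi xi - gi y).
have v2 := vsq_ge0 (gi y - gi xs).
have h3' : 5/2 * vsq (gi xi - gi y) <= 5/2 * (L ^+ 2 * vsq (xi - y)) by rewrite ler_pM2l //; lra.
have h4' : 5/2 * vsq (gi y - gi xs) <= 5/2 * (4 * L * (Fi y - Fi xs - vdot (gi xs) (y - xs))) by rewrite ler_pM2l //; lra.
lra.
Qed.

Lemma fsq_rows (R : realType) n p (M : 'M[R]_(n, p)) : fsq M = \sum_i vsq (row i M).
Proof. by apply: eq_bigr => i _; apply: eq_bigr => j _; rewrite !mxE expr2. Qed.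

Lemma inner_succ (R : realType) n m p W g (a : R) s (X : 'M[R]_(n, p)) l (hl : (l < m)%N) :
  drr_inner W g a s X l.+1 = drr_step W g a s (drr_inner W g a s X l) (Ordinal hl).
Proof.
rewrite /drr_inner (take_nth (Ordinal hl)) ?size_enum_ord // foldl_rcons.
by rewrite (nth_ord_enum (Ordinal hl) (Ordinal hl)).
Qed.

Theorem lemma7 (R : realType) (n m p : nat) (n_gt0 : (0 < n)%N) (m_gt0 : (0 < m)%N)
  (p_gt0 : (0 < p)%N)
  (F : 'I_n -> 'I_m -> 'rV[R]_p -> R) (g : 'I_n -> 'I_m -> 'rV[R]_p -> 'rV[R]_p)
  (mu L : R) (W : 'M[R]_n) (E : rel 'I_n)
  (X0 : 'M[R]_(n, p)) (alpha : nat -> R) (xs : 'rV[R]_p) :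
  (* graph: undirected, connected; W nonnegative, symmetric, stochastic, compliant *)
  (forall i j, E i j = E j i) -> (forall i, ~~ E i i) -> (forall i j, connect E i j) ->
  (forall i j, 0 <= W i j) -> W^T = W -> (forall i, \sum_(j < n) W i j = 1) ->
  (forall i j, i != j -> (0 < W i j) = E i j) ->
  (* smoothness and strong convexity *)
  0 < mu -> mu <= L ->
  (forall i l, is_gradient (F i l) (g i l)) ->
  (forall i l, strongly_convex_with mu (F i l) (g i l)) ->
  (forall i l, lipschitz_with L (g i l)) ->
  (* xs minimizes f = (1/n) sum_i (1/m) sum_l f_{i,l} *)
  (forall x, n%:R^-1 * \sum_(i < n) (m%:R^-1 * \sum_(l < m) F i l xs)
             <= n%:R^-1 * \sum_(i < n) (m%:R^-1 * \sum_(l < m) F i l x)) ->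
  (forall t, 0 < alpha t) ->
  (let rho := spectral_norm (W - n%:R^-1 *: const_mx 1) in
   forall t, rho != 0 ->
     alpha t <= Num.sqrt ((2 - rho ^+ 2) / (24 * rho ^+ 2 * (5 - rho ^+ 2)))
                * (1 - rho ^+ 2) / L) ->
  let rho := spectral_norm (W - n%:R^-1 *: const_mx 1) in
  forall (t l : nat), (l < m)%N ->
  let Xl := fun (om : sample n m t) (k : nat) =>
    drr_inner W g (alpha t) (om ord_max) (drr_outer W g alpha X0 om t) k in
  Exp (fun om => fsq (cons_err (Xl om l.+1)))
  <= (1 + rho ^+ 2) / 2 * Exp (fun om => fsq (cons_err (Xl om l)))
     + 30 * alpha t ^+ 2 * n%:R * L ^+ 2 / (1 - rho ^+ 2)
       * Exp (fun om => vsq (avg_row (Xl om l) - xbar_star g (alpha t) (om ord_max) xs l))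
     + 15 * n%:R * rho ^+ 2 * alpha t ^+ 2 / (1 - rho ^+ 2)
       * (sigma_star_sq g xs + 2 * L * sigma_shuffle_sq F g (alpha t) xs).
Proof.
move=> hEs hEi hconn hW0 hT hs hcompl mu0 muL hgrad hsc hlip hmin halpha hstep rho t l hl.
cbv zeta.
set Xl := fun om : sample n m t => drr_inner W g (alpha t) (om ord_max) (drr_outer W g alpha X0 om t).
have L0 : 0 < L by exact: lt_le_trans mu0 muL.
set x := rho ^+ 2.
set a := alpha t.
have x0 : 0 <= x by exact: sqr_ge0.
have [x1 hA] : x < 1 /\ 24 * x * (5 - x) * (a ^+ 2 * L ^+ 2) <= (2 - x) * (1 - x) ^+ 2.
  have ha : 0 < a := halpha t.
  have [r0|rn0] := eqVneq rho 0.
    have -> : x = 0 by rewrite /x r0 expr0n.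
    split; first lra.
    rewrite !subr0 expr1n mulr1 mulr0 !mul0r; lra.
  move: hstep; cbv zeta => /(_ t rn0); rewrite -/rho -/x -/a => hst.
  set q := (2 - x) / (24 * x * (5 - x)) in hst.
  have sq0 := sqrtr_ge0 (Num.sqrt q).
  have s0 : 0 <= Num.sqrt q by exact: sqrtr_ge0.
  have hst' : a * L <= Num.sqrt q * (1 - x) by rewrite -ler_pdivlMr.
  have xlt : x < 1.
    rewrite ltNge; apply/negP => hx1.
    have : Num.sqrt q * (1 - x) <= 0 by apply: mulr_ge0_le0 => //; lra.
    have : 0 < a * L by exact: mulr_gt0.
    lra.
  have spos : 0 < Num.sqrt q.
    rewrite lt_def s0 andbT; apply/negP => /eqP e0.
    have : 0 < a * L by exact: mulr_gt0.
    rewrite e0 mul0r in hst'; lra.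
  have qpos : 0 < q by rewrite -sqrtr_gt0.
  have xpos : 0 < x by rewrite lt_def sqrf_eq0 rn0 x0.
  have h5 : 0 < 5 - x by lra.
  have eq : 24 * x * (5 - x) * q = 2 - x by rewrite /q; field; rewrite ?gt_eqF.
  split => //.
  have hsq : (a * L) ^+ 2 <= (Num.sqrt q * (1 - x)) ^+ 2.
    by rewrite ler_pXn2r // nnegrE; [apply: mulr_ge0; lra| apply: mulr_ge0; lra].
  rewrite !exprMn sqr_sqrtr in hsq; last exact: ltW.
  have k0 : 0 < 24 * x * (5 - x) by apply: mulr_gt0 => //; lra.
  by rewrite -eq -[X in _ <= X]mulrA ler_pM2l.
pose lo := Ordinal hl.
pose Sst (s : {ffun 'I_n -> 'S_m}) := \sum_i vsq (g i (s i lo) xs).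
pose Dfun (s : {ffun 'I_n -> 'S_m}) :=
      let sb := fun x => n%:R^-1 * \sum_(i < n) F i (s i lo) x in
      let gsb := n%:R^-1 *: \sum_(i < n) g i (s i lo) xs in
      let y := xbar_star g a s xs lo in
      sb y - sb xs - vdot gsb (y - xs).
have nR0 : (0 : R) < n%:R by rewrite ltr0n.
have persample : forall om : sample n m t,
  fsq (cons_err (Xl om l.+1)) <= (1 + x) / 2 * fsq (cons_err (Xl om l))
    + 30 * a ^+ 2 * n%:R * L ^+ 2 / (1 - x) * vsq (avg_row (Xl om l) - xbar_star g a (om ord_max) xs l)
    + 15 * x * a ^+ 2 / (1 - x) * Sst (om ord_max) + 30 * x * L * a ^+ 2 * n%:R / (1 - x) * Dfun (om ord_max).
  move=> om.
  have -> : Xl om l.+1 = drr_step W g a (om ord_max) (Xl om l) lo by exact: inner_succ.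
  set X := Xl om l; set s := om ord_max; set y := xbar_star g a s xs l.
  rewrite /drr_step; set G := \matrix_(i < n) _.
  have h1 := cons_contract n_gt0 (X - a *: G) hT hs.
  rewrite cons_lin -/rho -/x in h1.
  have cpos : 0 < (1 - x) / (2 + x) by apply: divr_gt0; lra.
  have h2 := fsq_young (cons_err X) (cons_err G) a cpos.
  have h3 := fsq_cons_le n_gt0 G.
  have hQ : fsq G <= 5 / 2 * L ^+ 2 * (fsq (cons_err X) + n%:R * vsq (avg_row X - y))
                     + 10 * L * n%:R * Dfun s + 5 * Sst s.
    rewrite fsq_rows; under eq_bigr do rewrite rowK.
    apply: le_trans (ler_sum _ (fun i _ => @term_bound _ _ (F i (s i lo)) (g i (s i lo)) mu L
             (row i X) y xs mu0 L0 (hsc _ _) (hlip _ _))) _.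
    have eD : n%:R * Dfun s = \sum_i (F i (s i lo) y - F i (s i lo) xs - vdot (g i (s i lo) xs) (y - xs)).
      rewrite /Dfun /= vdotZl vdot_suml !sumrB !mulrBr !mulrA mulfV ?gt_eqF // !mul1r.
      done.
    rewrite !big_split /= -!mulr_sumr rows_ident // -eD /Sst.
    by rewrite le_eqVlt; apply/orP; left; apply/eqP; ring.
  apply: (final_arith x0 x1 L0 (ltW nR0) (fsq_ge0 _) (vsq_ge0 _) hA _ hQ).
  apply: (le_trans h1); rewrite ler_wpM2l //.
  apply: (le_trans h2); rewrite lerD2l ler_wpM2l //.
  apply: mulr_ge0; [apply: addr_ge0 => //; rewrite invr_ge0; exact: ltW| exact: sqr_ge0].
apply: le_trans (Exp_le persample) _.
rewrite !ExpD !ExpZ.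
have w1 : {ffun 'I_n -> 'S_m} := [ffun=> 1%g].
have ES : Exp (fun om : sample n m t => Sst (om ord_max)) = n%:R * sigma_star_sq g xs.
  rewrite (Exp_ffun ord_max w1 Sst) /Sst Exp_sum.
  have e : forall i, Exp (fun s : {ffun 'I_n -> 'S_m} => vsq (g i (s i lo) xs))
                 = m%:R^-1 * \sum_j vsq (g i j xs).
    move=> i.
    rewrite (Exp_ffun i 1%g (fun pi : 'S_m => vsq (g i (pi lo) xs))).
    rewrite (Exp_perm lo (fun j => vsq (g i j xs))) Exp_ord mulrC //.
  rewrite (eq_bigr _ (fun i _ => e i)) -mulr_sumr /sigma_star_sq natrM invfM.
  by field; rewrite !pnatr_eq0 -!lt0n n_gt0 m_gt0.
have ED : Exp (fun om : sample n m t => Dfun (om ord_max)) <= sigma_shuffle_sq F g a xs.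
  rewrite (Exp_ffun ord_max w1 Dfun).
  exact: (@le_bigmax0 R _ (index_enum _) (fun l0 : 'I_m => Exp (fun s : {ffun 'I_n -> 'S_m} =>
      let sb := fun x => n%:R^-1 * \sum_(i < n) F i (s i l0) x in
      let gsb := n%:R^-1 *: \sum_(i < n) g i (s i l0) xs in
      let y := xbar_star g a s xs l0 in
      sb y - sb xs - vdot gsb (y - xs))) lo (mem_index_enum lo)).
rewrite ES.
have K3 : 0 <= 30 * x * L * a ^+ 2 * n%:R / (1 - x).
  apply: divr_ge0; last lra.
  apply: mulr_ge0; last exact: ltW.
  apply: mulr_ge0; last exact: sqr_ge0.
  apply: mulr_ge0; last exact: ltW.
  by apply: mulr_ge0 => //; lra.
have := ler_wpM2l K3 ED.
set E1 := Exp _; set E2 := Exp _; set E3 := Exp _.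
set s1 := sigma_star_sq _ _; set s2 := sigma_shuffle_sq _ _ _ _.
move=> hD.
have e1 : 15 * n%:R * x * a ^+ 2 / (1 - x) * (s1 + 2 * L * s2) =
   15 * x * a ^+ 2 / (1 - x) * (n%:R * s1) + 30 * x * L * a ^+ 2 * n%:R / (1 - x) * s2.
  by field; rewrite gt_eqF //; lra.
rewrite e1; lra.
Qed.
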